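(* Let $N$ be a central graded ideal of a Lie superalgebra $L$. Then $N\subseteq Z^{*}(L)$ if and only if the natural map $\sigma:\mathcal{M}(L)\to\mathcal{M}(L/N)$ is a monomorphism.
   Context: All algebras are over a field $\mathbb{F}$ of characteristic $\neq 2,3$. For a free presentation $0\to R\to F\to L\to 0$ ($F$ free Lie superalgebra, $R$ graded ideal), the Schur multiplier is $\mathcal{M}(L)=(R\cap F')/[R,F]$; writing $N=S/R$ for a graded ideal $S\supseteq R$ of $F$, $\mathcal{M}(L/N)=(S\cap F')/[S,F]$ and $\sigma(x+[R,F])=x+[S,F]$. A Lie superalgebra is capable if it is isomorphic to $H/Z(H)$ for some Lie superalgebra $H$; the epicenter $Z^{*}(L)$ is the smallest graded ideal $I$ of $L$ with $L/I$ capable. *)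

(* Defs.v *)
From HB Require Import structures.
From mathcomp Require Import all_boot all_order all_algebra.
Set Implicit Arguments. Unset Strict Implicit. Unset Printing Implicit Defensive.
Import GRing.Theory.
Local Open Scope ring_scope.

(* sign (-1)^(p q) for parities p q (false = even, true = odd) *)
Definition psign (F : fieldType) (p q : bool) : F := if p && q then -1 else 1.

(* A Lie superalgebra: a vector space L = L_0 (+) L_1 with a bilinear bracket
   satisfying grading, super-antisymmetry and the super-Jacobi identity.
   [lsa_hom b x] means x is homogeneous of parity b (false = even, true = odd). *)
Record lieSuperAlg (F : fieldType) := LieSuperAlg {
  lsa_car :> lmodType F;
  lsa_br : lsa_car -> lsa_car -> lsa_car;
  lsa_hom : bool -> lsa_car -> Prop;
  lsa_hom0 : forall b, lsa_hom b 0;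
  lsa_homD : forall b x y, lsa_hom b x -> lsa_hom b y -> lsa_hom b (x + y);
  lsa_homZ : forall b (a : F) x, lsa_hom b x -> lsa_hom b (a *: x);
  lsa_decomp : forall x, exists x0 x1, lsa_hom false x0 /\ lsa_hom true x1 /\ x = x0 + x1;
  lsa_disj : forall x, lsa_hom false x -> lsa_hom true x -> x = 0;
  lsa_brDl : forall (a : F) x y z, lsa_br (a *: x + y) z = a *: lsa_br x z + lsa_br y z;
  lsa_brDr : forall (a : F) x y z, lsa_br x (a *: y + z) = a *: lsa_br x y + lsa_br x z;
  lsa_br_hom : forall p q x y, lsa_hom p x -> lsa_hom q y -> lsa_hom (addb p q) (lsa_br x y);
  lsa_antisym : forall p q x y, lsa_hom p x -> lsa_hom q y ->
      lsa_br x y = - (psign F p q *: lsa_br y x);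
  lsa_jacobi : forall p q r x y z, lsa_hom p x -> lsa_hom q y -> lsa_hom r z ->
      psign F p r *: lsa_br x (lsa_br y z) + psign F q p *: lsa_br y (lsa_br z x)
      + psign F r q *: lsa_br z (lsa_br x y) = 0
}.

Arguments lsa_br {F} l _ _ : rename.
Arguments lsa_hom {F} l _ _ : rename.

Section Defs.
Variable F : fieldType.

Definition subspace (L : lieSuperAlg F) (V : L -> Prop) : Prop :=
  V 0 /\ (forall x y, V x -> V y -> V (x + y)) /\ (forall (a : F) x, V x -> V (a *: x)).

Definition graded (L : lieSuperAlg F) (V : L -> Prop) : Prop :=
  forall x, V x -> exists x0 x1, V x0 /\ lsa_hom L false x0 /\ V x1 /\ lsa_hom L true x1
                                 /\ x = x0 + x1.

Definition graded_ideal (L : lieSuperAlg F) (I : L -> Prop) : Prop :=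
  subspace I /\ graded I /\ (forall x y, I y -> I (lsa_br L x y)).

Definition center (L : lieSuperAlg F) (z : L) : Prop := forall x, lsa_br L z x = 0.

Definition is_hom (L K : lieSuperAlg F) (f : L -> K) : Prop :=
  (forall x y, f (x + y) = f x + f y) /\
  (forall (a : F) x, f (a *: x) = a *: f x) /\
  (forall x y, f (lsa_br L x y) = lsa_br K (f x) (f y)) /\
  (forall b x, lsa_hom L b x -> lsa_hom K b (f x)).

Definition surj (L K : lieSuperAlg F) (f : L -> K) : Prop := forall y, exists x, f x = y.

(* L is capable: L is isomorphic to H / Z(H) for some H, i.e. there is a
   surjective homomorphism H -> L with kernel Z(H). *)
Definition capable (L : lieSuperAlg F) : Prop :=
  exists (H : lieSuperAlg F) (f : H -> L),
    is_hom f /\ surj f /\ (forall h, f h = 0 <-> center h).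

(* L / I is capable: some (equivalently every) quotient of L by I,
   i.e. a Q with a surjective homomorphism L -> Q of kernel I, is capable. *)
Definition quotient_capable (L : lieSuperAlg F) (I : L -> Prop) : Prop :=
  exists (Q : lieSuperAlg F) (p : L -> Q),
    is_hom p /\ surj p /\ (forall x, p x = 0 <-> I x) /\ capable Q.

(* membership in the epicenter Z^*(L): the smallest graded ideal I with L/I capable,
   i.e. the intersection of all such graded ideals. *)
Definition epicenter (L : lieSuperAlg F) (x : L) : Prop :=
  forall I : L -> Prop, graded_ideal I -> quotient_capable I -> I x.

Definition is_free_on (Fr : lieSuperAlg F) (X : Type) (par : X -> bool) (i : X -> Fr) : Prop :=
  (forall x, lsa_hom Fr (par x) (i x)) /\
  forall (K : lieSuperAlg F) (g : X -> K), (forall x, lsa_hom K (par x) (g x)) ->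
    exists phi : Fr -> K, is_hom phi /\ (forall x, phi (i x) = g x) /\
      forall psi : Fr -> K, is_hom psi -> (forall x, psi (i x) = g x) -> forall y, psi y = phi y.

Definition brspan (L : lieSuperAlg F) (A B : L -> Prop) (x : L) : Prop :=
  forall V : L -> Prop, subspace V -> (forall a b, A a -> B b -> V (lsa_br L a b)) -> V x.

(* injectivity of sigma : (R cap F')/[R,F] -> (S cap F')/[S,F],  x+[R,F] |-> x+[S,F] *)
Definition schur_sigma_injective (Fr : lieSuperAlg F) (R S : Fr -> Prop) : Prop :=
  let Fr' := brspan (fun _ => True) (fun _ => True) in
  forall x y, R x -> Fr' x -> R y -> Fr' y ->
    brspan S (fun _ => True) (x - y) -> brspan R (fun _ => True) (x - y).

End Defs.

(* Main.v *)
Require Import Defs.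
From HB Require Import structures.
From mathcomp Require Import all_boot all_order all_algebra.
From mathcomp Require Import boolp.
Set Implicit Arguments. Unset Strict Implicit. Unset Printing Implicit Defensive.
Import GRing.Theory.
Local Open Scope ring_scope.

Section Gen.
Variable F : fieldType.

Lemma psign2 p q : psign F p q * psign F p q = 1.
Proof. by rewrite /psign; case: (p && q); rewrite ?mulrNN mulr1. Qed.

Variable L : lieSuperAlg F.
Local Notation br := (lsa_br L).
Local Notation hom := (lsa_hom L).

Lemma sub_opp (V : L -> Prop) : subspace V -> forall x, V x -> V (- x).
Proof. by move=> [h0 [hD hZ]] x /(hZ (-1)); rewrite scaleN1r. Qed.

Lemma sub_sub (V : L -> Prop) : subspace V -> forall x y, V x -> V y -> V (x - y).
Proof. move=> hV x y hx hy; case: (hV) => [h0 [hD hZ]]; apply: (hD) => //; exact: sub_opp. Qed.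


Lemma br0l z : br 0 z = 0.
Proof.
have := lsa_brDl 1 (0 : L) 0 z; rewrite scaler0 addr0 scale1r.
by move/(congr1 (fun t => t - br 0 z)); rewrite subrr addrK.
Qed.
Lemma br0r z : br z 0 = 0.
Proof.
have := lsa_brDr 1 z (0 : L) 0; rewrite scaler0 addr0 scale1r.
by move/(congr1 (fun t => t - br z 0)); rewrite subrr addrK.
Qed.
Lemma brDl x y z : br (x + y) z = br x z + br y z.
Proof. by have := lsa_brDl 1 x y z; rewrite !scale1r. Qed.
Lemma brDr x y z : br z (x + y) = br z x + br z y.
Proof. by have := lsa_brDr 1 z x y; rewrite !scale1r. Qed.
Lemma brZl a x z : br (a *: x) z = a *: br x z.
Proof. by have := lsa_brDl a x 0 z; rewrite !addr0 br0l addr0. Qed.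
Lemma brZr a x z : br z (a *: x) = a *: br z x.
Proof. by have := lsa_brDr a z x 0; rewrite !addr0 br0r addr0. Qed.
Lemma brNl x z : br (- x) z = - br x z.
Proof. by rewrite -scaleN1r brZl scaleN1r. Qed.
Lemma brNr x z : br z (- x) = - br z x.
Proof. by rewrite -scaleN1r brZr scaleN1r. Qed.
Lemma brBl x y z : br (x - y) z = br x z - br y z.
Proof. by rewrite brDl brNl. Qed.
Lemma brBr x y z : br z (x - y) = br z x - br z y.
Proof. by rewrite brDr brNr. Qed.

Lemma homN b x : hom b x -> hom b (- x).
Proof. by move/(lsa_homZ (-1)); rewrite scaleN1r. Qed.
Lemma homB b x y : hom b x -> hom b y -> hom b (x - y).
Proof. by move=> hx hy; apply: lsa_homD => //; exact: homN. Qed.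

Lemma hom_both b x : hom b x -> hom (~~ b) x -> x = 0.
Proof. by case: b => h1 h2; apply: lsa_disj. Qed.

Lemma hom_sum0 b a c : hom b a -> hom (~~ b) c -> a + c = 0 -> a = 0 /\ c = 0.
Proof.
move=> ha hc e.
have ea : a = - c by apply/eqP; rewrite -subr_eq0 opprK e.
have a0 : a = 0 by apply: (hom_both ha); rewrite ea; exact: homN.
by split => //; move: e; rewrite a0 add0r.
Qed.

Lemma hom_neq_sum0 p q a c : hom p a -> hom q c -> p != q -> a + c = 0 -> a = 0 /\ c = 0.
Proof.
move=> ha hc; case: p ha => ha; case: q hc => hc //= _.
- exact: (@hom_sum0 true).
- exact: (@hom_sum0 false).
Qed.

Lemma graded_T : graded (fun _ : L => True).
Proof. by move=> x _; case: (lsa_decomp x) => x0 [x1 [h0 [h1 e]]]; exists x0, x1. Qed.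

Lemma br_dec (V A B : L -> Prop) : subspace V -> graded A -> graded B ->
  (forall p q a b, A a -> B b -> hom p a -> hom q b -> V (br a b)) ->
  forall a b, A a -> B b -> V (br a b).
Proof.
move=> [h0 [hD hZ]] gA gB h a b ha hb.
case: (gA a ha) => a0 [a1 [Aa0 [ha0 [Aa1 [ha1 ->]]]]].
case: (gB b hb) => b0 [b1 [Bb0 [hb0 [Bb1 [hb1 ->]]]]].
rewrite !brDl !brDr; apply: (hD); apply: (hD); eapply h; eassumption.
Qed.

Lemma br_decT (V : L -> Prop) : subspace V ->
  (forall p q a b, hom p a -> hom q b -> V (br a b)) -> forall a b, V (br a b).
Proof.
move=> hV h a b; apply: (br_dec hV graded_T graded_T) => // p q a' b' _ _; exact: h.
Qed.

Lemma center_dec z z0 z1 : center z -> hom false z0 -> hom true z1 -> z = z0 + z1 ->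
  center z0 /\ center z1.
Proof.
move=> hz h0 h1 ez.
have key : forall y, br z0 y = 0 /\ br z1 y = 0.
  move=> y; case: (lsa_decomp y) => y0 [y1 [hy0 [hy1 ->]]].
  have k : forall q yq, hom q yq -> br z0 yq = 0 /\ br z1 yq = 0.
    move=> q yq hq; apply: (@hom_neq_sum0 (addb false q) (addb true q)).
    - exact: lsa_br_hom. - exact: lsa_br_hom. - by case: q {hq}.
    by rewrite -brDl -ez hz.
  rewrite !brDr; case: (k _ _ hy0) => -> ->; case: (k _ _ hy1) => -> ->; by rewrite addr0.
by split => y; case: (key y).
Qed.

Lemma center_sub : subspace (@center F L).
Proof.
split; first by move=> x; exact: br0l.
split; first by move=> x y hx hy z; rewrite brDl hx hy addr0.
by move=> a x hx z; rewrite brZl hx scaler0.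
Qed.

Lemma br_center_r x z : center z -> br x z = 0.
Proof.
move=> hz; case: (lsa_decomp z) => z0 [z1 [h0 [h1 ez]]].
case: (center_dec hz h0 h1 ez) => c0 c1.
have : forall p q a b, hom p a -> hom q b -> center b -> br a b = 0.
  by move=> p q a b ha hb cb; rewrite (lsa_antisym ha hb) cb scaler0 oppr0.
move=> k; case: (lsa_decomp x) => x0 [x1 [hx0 [hx1 ->]]].
by rewrite ez !brDl !brDr (k _ _ _ _ hx0 h0) // (k _ _ _ _ hx0 h1) // (k _ _ _ _ hx1 h0) // (k _ _ _ _ hx1 h1) // !addr0.
Qed.

Lemma center_gi : graded_ideal (@center F L).
Proof.
split; first exact: center_sub.
split; last by move=> x y hy z; rewrite (br_center_r x hy) br0l.
move=> z hz; case: (lsa_decomp z) => z0 [z1 [h0 [h1 ez]]].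
case: (center_dec hz h0 h1 ez) => c0 c1; by exists z0, z1.
Qed.

Lemma gi_right (J : L -> Prop) : graded_ideal J -> forall j y, J j -> J (br j y).
Proof.
move=> [hs [hg hi]] j y hj.
apply: (br_dec hs hg graded_T) => // p q a b ha _ hpa hqb.
rewrite (lsa_antisym hpa hqb); apply: sub_opp => //; case: hs => _ [_ hZ]; apply: (hZ); exact: hi.
Qed.

Lemma brspan_sub (A B : L -> Prop) : subspace (brspan A B).
Proof.
split; first by move=> V [h0 _].
split; first by move=> x y hx hy V hV hAB; case: (hV) => _ [hD _]; apply: (hD); [exact: hx | exact: hy].
by move=> a x hx V hV hAB; case: (hV) => _ [_ hZ]; apply: (hZ); exact: hx.
Qed.

Lemma brspan_br (A B : L -> Prop) a b : A a -> B b -> brspan A B (br a b).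
Proof. by move=> ha hb V _ h; exact: h. Qed.

End Gen.

Section Homs.
Variable F : fieldType.

Lemma hom_0 (L K : lieSuperAlg F) (f : L -> K) : is_hom f -> f 0 = 0.
Proof.
move=> [hD _]; have := hD 0 0; rewrite addr0.
by move/(congr1 (fun t => t - f 0)); rewrite subrr addrK.
Qed.

Lemma hom_N (L K : lieSuperAlg F) (f : L -> K) : is_hom f -> forall x, f (- x) = - f x.
Proof. by move=> [hD [hZ _]] x; rewrite -scaleN1r hZ scaleN1r. Qed.

Lemma hom_B (L K : lieSuperAlg F) (f : L -> K) : is_hom f -> forall x y, f (x - y) = f x - f y.
Proof. by move=> hf x y; rewrite (proj1 hf) hom_N. Qed.

Lemma ker_gi (L K : lieSuperAlg F) (f : L -> K) : is_hom f -> graded_ideal (fun x => f x = 0).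
Proof.
move=> hf; have [hD [hZ [hB hH]]] := hf.
split.
  split; first exact: hom_0.
  by split=> [x y hx hy|a x hx]; rewrite ?hD ?hZ ?hx ?hy ?addr0 ?scaler0.
split; last by move=> x y hy; rewrite hB hy br0r.
move=> x hx; case: (lsa_decomp x) => x0 [x1 [h0 [h1 e]]].
have [e0 e1] : f x0 = 0 /\ f x1 = 0.
  by apply: (@hom_sum0 _ _ false); [exact: hH | exact: hH | rewrite -hD -e].
by exists x0, x1.
Qed.

Lemma hom_comp (L K M : lieSuperAlg F) (f : L -> K) (g : K -> M) :
  is_hom f -> is_hom g -> is_hom (fun x => g (f x)).
Proof.
move=> [fD [fZ [fB fH]]] [gD [gZ [gB gH]]]; split; first by move=> x y; rewrite fD gD.
split; first by move=> a x; rewrite fZ gZ.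
split; first by move=> x y; rewrite fB gB.
by move=> b x hx; apply: gH; exact: fH.
Qed.

Lemma hom_preim (L K : lieSuperAlg F) (f : L -> K) : is_hom f -> surj f ->
  forall b y, lsa_hom K b y -> exists x, lsa_hom L b x /\ f x = y.
Proof.
move=> hf hs b y hy; have [fD [fZ [fB fH]]] := hf.
case: (hs y) => x ex; case: (lsa_decomp x) => x0 [x1 [h0 [h1 e]]].
rewrite e fD in ex.
case: b hy => hy.
- have e0 : f x0 = 0.
    apply: (@hom_both _ _ false); first exact: fH.
    rewrite (_ : f x0 = y - f x1); last by rewrite -ex addrK.
    by apply: homB => //; exact: fH.
  by exists x1; split => //; rewrite -ex e0 add0r.
- have e1 : f x1 = 0.
    apply: (@hom_both _ _ true); first exact: fH.
    rewrite (_ : f x1 = y - f x0); last by rewrite -ex [f x0 + _]addrC addrK.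
    by apply: homB => //; exact: fH.
  by exists x0; split => //; rewrite -ex e1 addr0.
Qed.

End Homs.

Section Desc.
Variable F : fieldType.

Lemma descend (L B C : lieSuperAlg F) (g : L -> B) (h : L -> C) :
  is_hom g -> surj g -> is_hom h -> (forall x, g x = 0 -> h x = 0) ->
  exists k : B -> C, is_hom k /\ forall x, k (g x) = h x.
Proof.
move=> hg hs hh hk.
have wd : forall x y, g x = g y -> h x = h y.
  move=> x y e; apply/eqP; rewrite -subr_eq0 -(hom_B hh); apply/eqP; apply: hk.
  by rewrite (hom_B hg) e subrr.
pose k b := h (projT1 (cid (hs b))).
have kE : forall x, k (g x) = h x by move=> x; apply: wd; exact: (projT2 (cid (hs (g x)))).
exists k; split; last exact: kE.
have [gD [gZ [gB gH]]] := hg; have [hD [hZ [hB hH]]] := hh.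
split; first by move=> b1 b2; case: (hs b1) => x1 <-; case: (hs b2) => x2 <-; rewrite -gD !kE hD.
split; first by move=> a b1; case: (hs b1) => x1 <-; rewrite -gZ !kE hZ.
split; first by move=> b1 b2; case: (hs b1) => x1 <-; case: (hs b2) => x2 <-; rewrite -gB !kE hB.
move=> b y hy; case: (hom_preim hg hs hy) => x [hx <-]; rewrite kE; exact: hH.
Qed.

Variable L : lieSuperAlg F.
Local Notation br := (lsa_br L).
Local Notation hom := (lsa_hom L).

Lemma brspan_ind (A B V : L -> Prop) : subspace V -> (forall a b, A a -> B b -> V (br a b)) ->
  forall x, brspan A B x -> V x.
Proof. by move=> hV h x hx; exact: hx. Qed.

Variable R : L -> Prop.
Hypothesis hR : graded_ideal R.
Local Notation K := (brspan R (fun _ => True)).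

Lemma K_sub : subspace K. Proof. exact: brspan_sub. Qed.

Lemma K_graded : graded K.
Proof.
pose G x := exists x0 x1, K x0 /\ hom false x0 /\ K x1 /\ hom true x1 /\ x = x0 + x1.
have [k0 [kD kZ]] := K_sub.
have hG : subspace G.
  split; first by exists 0, 0; rewrite addr0; refine (conj k0 (conj (lsa_hom0 _ _) (conj k0 (conj (lsa_hom0 _ _) erefl)))).
  split.
    move=> x y [x0 [x1 [a1 [a2 [a3 [a4 ->]]]]]] [y0 [y1 [b1 [b2 [b3 [b4 ->]]]]]].
    exists (x0 + y0), (x1 + y1).
    refine (conj (kD _ _ a1 b1) (conj (lsa_homD a2 b2) (conj (kD _ _ a3 b3) (conj (lsa_homD a4 b4) _)))).
    by rewrite addrACA.
  move=> a x [x0 [x1 [a1 [a2 [a3 [a4 ->]]]]]]; exists (a *: x0), (a *: x1).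
  refine (conj (kZ _ _ a1) (conj (lsa_homZ _ a2) (conj (kZ _ _ a3) (conj (lsa_homZ _ a4) _)))).
  by rewrite scalerDr.
have : forall x, K x -> G x.
  apply: brspan_ind => //; apply: (br_dec hG (proj1 (proj2 hR)) (@graded_T _ L)).
  move=> p q a b ha _ hpa hqb; have hk : K (br a b) := @brspan_br _ _ R (fun _ => True) a b ha I.
  have hb := lsa_br_hom hpa hqb.
  case e : (addb p q) hb => hb.
  - by exists 0, (br a b); rewrite add0r; refine (conj k0 (conj (lsa_hom0 _ _) (conj hk (conj hb erefl)))).
  - by exists (br a b), 0; rewrite addr0; refine (conj hk (conj hb (conj k0 (conj (lsa_hom0 _ _) erefl)))).
by move=> h x /h.
Qed.

Lemma K_ideal : forall x y, K y -> K (br x y).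
Proof.
have [k0 [kD kZ]] := K_sub.
have [rs [rg ri]] := hR.
have hom_case : forall p x, hom p x -> forall y, K y -> K (br x y).
  move=> p x hx.
  pose V y := K (br x y).
  have hV : subspace V.
    split; first by rewrite /V br0r.
    by split => [a b ha hb|c a ha]; rewrite /V ?brDr ?brZr; [apply: (kD) | apply: (kZ)].
  apply: brspan_ind => //.
  apply: (br_dec hV rg (@graded_T _ L)) => q s r g hr _ hq hs.
  rewrite /V.
  have J := lsa_jacobi hx hq hs.
  set u := psign F q p *: br r (br g x) + psign F s q *: br g (br x r).
  have Ku : K u.
    apply: (kD); apply: (kZ); first exact: (@brspan_br _ _ R (fun _ => True) _ _ hr I).
    have hc := lsa_br_hom hx hq.
    rewrite (lsa_antisym hs hc); apply: (sub_opp K_sub).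
    apply: (kZ); exact: (@brspan_br _ _ R (fun _ => True) _ _ (ri x r hr) I).
  have -> : br x (br r g) = psign F p s *: (- u).
    have -> : - u = psign F p s *: br x (br r g).
      by apply/eqP; rewrite eq_sym -subr_eq0 opprK /u addrA J.
    by rewrite scalerA psign2 scale1r.
  by apply: (kZ); apply: (sub_opp K_sub).
move=> x y hy; case: (lsa_decomp x) => x0 [x1 [h0 [h1 ->]]].
by rewrite brDl; apply: (kD); [exact: (hom_case _ _ h0) | exact: (hom_case _ _ h1)].
Qed.

Lemma K_gi : graded_ideal K.
Proof. by split; [exact: K_sub | split; [exact: K_graded | exact: K_ideal]]. Qed.

End Desc.

Definition qcar (F : fieldType) (A : lieSuperAlg F) (J : A -> Prop) (hJ : graded_ideal J) : Type :=
  {P : A -> Prop | exists x : A, P = (fun y => J (y - x))}.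
HB.instance Definition _ F A J hJ := gen_eqMixin (@qcar F A J hJ).
HB.instance Definition _ F A J hJ := gen_choiceMixin (@qcar F A J hJ).

Section Q1.
Variables (F : fieldType) (A : lieSuperAlg F) (J : A -> Prop) (hJ : graded_ideal J).
Local Notation Q := (qcar hJ).
Local Notation br := (lsa_br A).

Definition qcls (x : A) : Q := exist _ (fun y => J (y - x)) (ex_intro _ x erefl).
Definition qrep (q : Q) : A := projT1 (cid (proj2_sig q)).

Lemma qrepK q : qcls (qrep q) = q.
Proof. by case: q => P hP; apply: eq_exist; rewrite /qrep /=; case: (cid hP) => x /= ->. Qed.

Lemma qind q : exists x, q = qcls x.
Proof. by exists (qrep q); rewrite qrepK. Qed.

Let hs := proj1 hJ.
Let j0 : J 0 := proj1 hs.
Let jD : forall x y, J x -> J y -> J (x + y) := proj1 (proj2 hs).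
Let jZ : forall (a : F) x, J x -> J (a *: x) := proj2 (proj2 hs).

Lemma qclsE x y : qcls x = qcls y <-> J (x - y).
Proof.
split.
  move/(congr1 (@proj1_sig _ _)) => /= e.
  by have := congr1 (fun P => P x) e => /=; rewrite subrr => <-.
move=> h; apply: eq_exist; apply: funext => z; apply: propext; split => hz.
  by rewrite (_ : z - y = (z - x) + (x - y)); [exact: jD | rewrite addrA subrK].
rewrite (_ : z - x = (z - y) - (x - y)); last by rewrite opprB addrA subrK.
exact: (sub_sub hs).
Qed.

Lemma qcls_rep x : J (qrep (qcls x) - x).
Proof. by apply/qclsE; rewrite qrepK. Qed.

Definition qadd (q1 q2 : Q) : Q := qcls (qrep q1 + qrep q2).
Definition qopp (q : Q) : Q := qcls (- qrep q).
Definition qzero : Q := qcls 0.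
Definition qscale (a : F) (q : Q) : Q := qcls (a *: qrep q).
Definition qbr (q1 q2 : Q) : Q := qcls (br (qrep q1) (qrep q2)).

Lemma qaddE x y : qadd (qcls x) (qcls y) = qcls (x + y).
Proof.
apply/qclsE; rewrite (_ : _ - _ = (qrep (qcls x) - x) + (qrep (qcls y) - y)).
  by apply: jD; exact: qcls_rep.
by rewrite opprD addrACA.
Qed.

Lemma qoppE x : qopp (qcls x) = qcls (- x).
Proof. apply/qclsE; rewrite opprK addrC -opprB; apply: (sub_opp hs); exact: qcls_rep. Qed.

Lemma qscaleE a x : qscale a (qcls x) = qcls (a *: x).
Proof. apply/qclsE; rewrite -scalerBr; apply: jZ; exact: qcls_rep. Qed.

Lemma qbrE x y : qbr (qcls x) (qcls y) = qcls (br x y).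
Proof.
apply/qclsE.
rewrite (_ : _ - _ = br (qrep (qcls x) - x) (qrep (qcls y)) + br x (qrep (qcls y) - y)).
  apply: jD; first by apply: (gi_right hJ); exact: qcls_rep.
  by apply: (proj2 (proj2 hJ)); exact: qcls_rep.
by rewrite brBl brBr addrA subrK.
Qed.

Lemma qaddA : associative qadd.
Proof.
move=> a b c; case: (qind a) => x ->; case: (qind b) => y ->; case: (qind c) => z ->.
by rewrite !qaddE addrA.
Qed.
Lemma qaddC : commutative qadd.
Proof. by move=> a b; case: (qind a) => x ->; case: (qind b) => y ->; rewrite !qaddE addrC. Qed.
Lemma qadd0 : left_id qzero qadd.
Proof. by move=> a; case: (qind a) => x ->; rewrite /qzero qaddE add0r. Qed.
Lemma qaddN : left_inverse qzero qopp qadd.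
Proof. by move=> a; case: (qind a) => x ->; rewrite qoppE qaddE addNr. Qed.

End Q1.

HB.instance Definition _ F A J hJ :=
  GRing.isZmodule.Build (@qcar F A J hJ) (@qaddA F A J hJ) (@qaddC F A J hJ)
    (@qadd0 F A J hJ) (@qaddN F A J hJ).

Section Q2.
Variables (F : fieldType) (A : lieSuperAlg F) (J : A -> Prop) (hJ : graded_ideal J).
Local Notation Q := (qcar hJ).

Lemma qaddE' x y : qcls hJ x + qcls hJ y = qcls hJ (x + y). Proof. exact: qaddE. Qed.
Lemma qoppE' x : - qcls hJ x = qcls hJ (- x). Proof. exact: qoppE. Qed.
Lemma qzeroE : (0 : Q) = qcls hJ 0. Proof. by []. Qed.

Lemma qscaleA a b (v : Q) : qscale a (qscale b v) = qscale (a * b) v.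
Proof. by case: (qind v) => x ->; rewrite !qscaleE scalerA. Qed.
Lemma qscale1 : left_id 1 (@qscale F A J hJ).
Proof. by move=> v; case: (qind v) => x ->; rewrite qscaleE scale1r. Qed.
Lemma qscaleDr : right_distributive (@qscale F A J hJ) +%R.
Proof.
move=> a u v; case: (qind u) => x ->; case: (qind v) => y ->.
by rewrite (qaddE' x y) !qscaleE (qaddE' (a *: x) (a *: y)) scalerDr.
Qed.
Lemma qscaleDl (v : Q) : {morph (@qscale F A J hJ)^~ v : a b / a + b}.
Proof. by move=> a b; case: (qind v) => x ->; rewrite !qscaleE (qaddE' (a *: x) (b *: x)) scalerDl. Qed.
End Q2.

HB.instance Definition _ (F : fieldType) (A : lieSuperAlg F) (J : A -> Prop) (hJ : graded_ideal J) :=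
  GRing.Zmodule_isLmodule.Build F (@qcar F A J hJ) (@qscaleA F A J hJ) (@qscale1 F A J hJ)
    (@qscaleDr F A J hJ) (@qscaleDl F A J hJ).

Section Q3.
Variables (F : fieldType) (A : lieSuperAlg F) (J : A -> Prop) (hJ : graded_ideal J).
Local Notation Q := (qcar hJ).
Local Notation br := (lsa_br A).
Local Notation hom := (lsa_hom A).
Local Notation cls := (qcls hJ).

Lemma qscaleE' a x : a *: cls x = cls (a *: x). Proof. exact: qscaleE. Qed.
Lemma qaddE3 x y : cls x + cls y = cls (x + y). Proof. exact: qaddE. Qed.
Lemma qoppE3 x : - cls x = cls (- x). Proof. exact: qoppE. Qed.
Lemma qzeroE3 : (0 : Q) = cls 0. Proof. by []. Qed.

Definition qhom (b : bool) (q : Q) : Prop := exists x, hom b x /\ q = cls x.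

Lemma qhom0 b : qhom b 0.
Proof. by exists 0; split; [exact: lsa_hom0 | ]. Qed.
Lemma qhomD b u v : qhom b u -> qhom b v -> qhom b (u + v).
Proof. by move=> [x [hx ->]] [y [hy ->]]; exists (x + y); rewrite qaddE3; split => //; exact: lsa_homD. Qed.
Lemma qhomZ b a u : qhom b u -> qhom b (a *: u).
Proof. by move=> [x [hx ->]]; exists (a *: x); rewrite qscaleE'; split => //; exact: lsa_homZ. Qed.
Lemma qdecomp u : exists u0 u1, qhom false u0 /\ qhom true u1 /\ u = u0 + u1.
Proof.
case: (qind u) => x ->; case: (lsa_decomp x) => x0 [x1 [h0 [h1 ->]]].
exists (cls x0), (cls x1); rewrite qaddE3; split; first by exists x0.
by split; first by exists x1.
Qed.
Lemma qdisj u : qhom false u -> qhom true u -> u = 0.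
Proof.
move=> [x0 [h0 ->]] [x1 [h1 /qclsE e]].
have [_ [gJ _]] := hJ.
case: (gJ _ e) => j0 [j1 [Jj0 [hj0 [Jj1 [hj1 ej]]]]].
have [a0 _] : x0 - j0 = 0 /\ - (x1 + j1) = 0.
  apply: (@hom_sum0 _ _ false); first exact: homB.
    by apply: homN; exact: lsa_homD.
  by rewrite opprD addrACA -opprD ej subrr.
rewrite qzeroE3; apply/qclsE; rewrite subr0.
by move/eqP: a0; rewrite subr_eq0 => /eqP ->.
Qed.

Lemma qbrE' x y : qbr (cls x) (cls y) = cls (br x y). Proof. exact: qbrE. Qed.

Lemma qbrDl (a : F) (u v w : Q) : qbr (a *: u + v) w = a *: qbr u w + qbr v w.
Proof.
case: (qind u) => x ->; case: (qind v) => y ->; case: (qind w) => z ->.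
by rewrite qscaleE' qaddE3 !qbrE' qscaleE' qaddE3 lsa_brDl.
Qed.
Lemma qbrDr (a : F) (u v w : Q) : qbr u (a *: v + w) = a *: qbr u v + qbr u w.
Proof.
case: (qind u) => x ->; case: (qind v) => y ->; case: (qind w) => z ->.
by rewrite qscaleE' qaddE3 !qbrE' qscaleE' qaddE3 lsa_brDr.
Qed.
Lemma qbr_hom p q (u v : Q) : qhom p u -> qhom q v -> qhom (addb p q) (qbr u v).
Proof. by move=> [x [hx ->]] [y [hy ->]]; exists (br x y); rewrite qbrE'; split => //; exact: lsa_br_hom. Qed.
Lemma qantisym p q (u v : Q) : qhom p u -> qhom q v -> qbr u v = - (psign F p q *: qbr v u).
Proof.
by move=> [x [hx ->]] [y [hy ->]]; rewrite !qbrE' qscaleE' qoppE3 (lsa_antisym hx hy).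
Qed.
Lemma qjacobi p q r (u v w : Q) : qhom p u -> qhom q v -> qhom r w ->
  psign F p r *: qbr u (qbr v w) + psign F q p *: qbr v (qbr w u)
  + psign F r q *: qbr w (qbr u v) = 0.
Proof.
move=> [x [hx ->]] [y [hy ->]] [z [hz ->]].
by rewrite !qbrE' !qscaleE' qzeroE3 -(lsa_jacobi hx hy hz) -!qaddE3.
Qed.

Definition qalg : lieSuperAlg F :=
  @LieSuperAlg F Q (@qbr F A J hJ) qhom qhom0 qhomD qhomZ qdecomp qdisj qbrDl qbrDr qbr_hom qantisym qjacobi.

Lemma qcls_hom : is_hom (cls : A -> qalg).
Proof.
split; first by move=> x y; rewrite qaddE3.
split; first by move=> a x; rewrite qscaleE'.
split; first by move=> x y; rewrite /= qbrE'.
by move=> b x hx; exists x.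
Qed.

Lemma qcls_surj : surj (cls : A -> qalg).
Proof. by move=> q; case: (qind q) => x ->; exists x. Qed.

Lemma qcls_ker x : (cls x : qalg) = 0 <-> J x.
Proof. by rewrite qzeroE3; split => [/qclsE|h]; rewrite ?subr0 //; apply/qclsE; rewrite subr0. Qed.

End Q3.


Theorem mainTheorem14 (F : fieldType)
  (hF2 : ~~ (2%N \in [pchar F])) (hF3 : ~~ (3%N \in [pchar F]))
  (L : lieSuperAlg F) (N : L -> Prop)
  (hN : graded_ideal N) (hNcentral : forall n, N n -> center n)
  (Fr : lieSuperAlg F) (X : Type) (par : X -> bool) (i : X -> Fr) (pi : Fr -> L)
  (hfree : is_free_on par i) (hpi : is_hom pi) (hpis : surj pi) :
  (forall x, N x -> epicenter x) <->
  schur_sigma_injective (fun x => pi x = 0) (fun x => N (pi x)).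
Proof.
pose R := fun x => pi x = 0.
have RG : graded_ideal R := ker_gi hpi.
pose K := brspan R (fun _ : Fr => True).
have KG : graded_ideal K := K_gi RG.
have Kbr : forall r y, R r -> K (lsa_br Fr r y).
  by move=> r y hr; exact: (@brspan_br _ _ R (fun _ => True) _ _ hr I).
have [piD [piZ [piB piH]]] := hpi.
split.
- move=> hepi Fr' x y Rx Fx Ry Fy hS.
  pose H := qalg KG.
  pose c : Fr -> H := qcls KG.
  have ZG := center_gi H.
  pose Q := qalg ZG.
  pose q : H -> Q := qcls ZG.
  have hc : is_hom c := qcls_hom KG.
  have hq : is_hom q := qcls_hom ZG.
  have hqc := hom_comp hc hq.
  have [cD [cZ [cB cH]]] := hc.
  have cR : forall r, R r -> center (c r).
    move=> r hr h; case: (qcls_surj (hJ := KG) h) => y0 <-.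
    rewrite -cB; apply/(qcls_ker KG); exact: Kbr.
  have [p [hp pE]] := descend hpi hpis hqc (fun x hx => proj2 (qcls_ker ZG (c x)) (cR x hx)).
  have SK : forall s y, N (pi s) -> K (lsa_br Fr s y).
    move=> s y0 hs.
    have : p (pi s) = 0.
      apply: (hepi _ hs (fun l => p l = 0) (ker_gi hp)).
      exists Q, p; split => //; split.
        move=> z; case: (qcls_surj (hJ := ZG) z) => h <-; case: (qcls_surj (hJ := KG) h) => y1 <-.
        by exists (pi y1); exact: pE.
      split => //.
      exists H, q; split => //; split; first exact: qcls_surj.
      exact: qcls_ker.
    rewrite pE => /(qcls_ker ZG) cs.
    apply/(qcls_ker KG); rewrite -/c cB; exact: cs.
  apply: (brspan_ind (K_sub R)) hS => s y0 hs _; exact: SK.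
- move=> hsig n hn I0 hI [Q [p [hp [hps [hpk [H [f [hf [hfs hfk]]]]]]]]].
  have SK : forall s y, N (pi s) -> K (lsa_br Fr s y).
    move=> s y hs.
    have := hsig (lsa_br Fr s y) 0.
    rewrite subr0; apply.
    - by rewrite /= piB (hNcentral _ hs).
    - exact: (@brspan_br _ _ (fun _ => True) (fun _ => True) _ _ I I).
    - exact: (hom_0 hpi).
    - exact: (proj1 (brspan_sub _ _)).
    - exact: (@brspan_br _ _ (fun x => N (pi x)) (fun _ => True) _ _ hs I).
  case: (hpis n) => s es.
  apply/hpk; rewrite -es.
  pose g := fun x => p (pi x).
  have hg : is_hom g := hom_comp hpi hp.
  have gs : surj g.
    by move=> z; case: (hps z) => l <-; case: (hpis l) => x <-; exists x.
  case: hfree => hpar univ.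
  have gH := proj2 (proj2 (proj2 hg)).
  have gen : forall x, {h : H | lsa_hom H (par x) h /\ f h = g (i x)}.
    by move=> x; apply: cid; exact: (hom_preim hf hfs (gH _ _ (hpar x))).
  case: (univ H (fun x => proj1_sig (gen x)) (fun x => proj1 (proj2_sig (gen x)))) => phi [hphi [phiE _]].
  case: (univ Q (fun x => g (i x)) (fun x => gH _ _ (hpar x))) => phi0 [_ [_ uniq]].
  have fphi : forall x, f (phi x) = g x.
    move=> x; rewrite (uniq _ (hom_comp hphi hf)); last first.
      by move=> x0; rewrite phiE; exact: (proj2 (proj2_sig (gen x0))).
    by rewrite (uniq _ hg).
  have [phD [phZ [phB phH]]] := hphi.
  have cR : forall r, R r -> center (phi r).
    by move=> r hr; apply/hfk; rewrite fphi /g hr (hom_0 hp).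
  have phiK : forall x, K x -> phi x = 0.
    apply: (brspan_ind (proj1 (ker_gi hphi))) => r y hr _.
    by rewrite phB (cR r hr).
  have cs : center (phi s).
    move=> h; case: (gs (f h)) => y ey.
    have cz : center (h - phi y) by apply/hfk; rewrite (hom_B hf) fphi ey subrr.
    rewrite -[h](subrK (phi y)) brDr (br_center_r _ cz) add0r -phB phiK //.
    apply: SK; by rewrite es.
  by rewrite -/(g s) -fphi; apply/hfk.
Qed.
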